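(* Let $B_1,\dots,B_n$ be independent real-valued service times with finite means $\mu_i$, each with a distribution symmetric around its mean, and put $X_i=B_i-\mu_i$. Fix a sequence $\tau\in\mathsf S_n$ and use the mean-based schedule. Then for each $k\in\{1,\dots,n-1\}$ and each $\ell\in\{0,1,\dots,k\}$, $$\mathbb EW_{k+1}\ge\tfrac12\Bigl(\mathbb E\bigl(X_{\tau(1)}+\cdots+X_{\tau(k)}\bigr)^++\mathbb E\bigl(X_{\tau(1)}+\cdots+X_{\tau(\ell)}\bigr)^++\mathbb E\bigl(X_{\tau(\ell+1)}+\cdots+X_{\tau(k)}\bigr)^+\Bigr),$$ with empty sums equal to $0$.
   Context: Under sequence $\tau$ ($\tau(i)$ the patient in slot $i$) and the mean-based schedule (interarrival time after patient $j$ equal to $\mu_j$), the waiting times are $W_1=0$, $W_{i+1}=(W_i+X_{\tau(i)})^+$ with $a^+=\max\{0,a\}$. *)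

(* Defs.v *)
From HB Require Import structures.
From mathcomp Require Import all_boot all_order all_algebra all_fingroup.
From mathcomp Require Import all_classical all_reals all_analysis.
Set Implicit Arguments. Unset Strict Implicit. Unset Printing Implicit Defensive.
Import Order.TTheory GRing.Theory Num.Theory.
Import numFieldNormedType.Exports.
Local Open Scope classical_set_scope.
Local Open Scope ring_scope.

Section Defs.
Context {d : measure_display} {T : measurableType d} {R : realType}.

(* mutual independence of a finite family of real random variables:
   product rule for every choice of Borel sets (choosing A i = setT
   recovers the product rule for every subfamily) *)
Definition mutually_independent (P : probability T R) (n : nat)
    (B : 'I_n -> T -> R) : Prop :=
  forall A : 'I_n -> set R, (forall i, measurable (A i)) ->
    P (\bigcap_i (B i @^-1` A i)) = (\prod_(i < n) P (B i @^-1` A i))%E.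

Definition mean (P : probability T R) (f : T -> R) : R :=
  fine (\int[P]_x (f x)%:E)%E.

Definition symmetric_law (P : probability T R) (f : T -> R) : Prop :=
  forall A : set R, measurable A ->
    P (f @^-1` A) = P ((fun x => - f x) @^-1` A).

(* X-value in slot j (0-indexed) under sequence tau; 0 outside range *)
Definition slotX (n : nat) (X : 'I_n -> T -> R) (tau : {perm 'I_n})
    (j : nat) (x : T) : R :=
  match @insub nat (fun m => m < n)%N 'I_n j with
  | Some i => X (tau i) x
  | None => 0
  end.

(* waiting times (0-indexed): waiting 0 = W_1 = 0,
   waiting (j+1) = W_{j+2} = (W_{j+1} + X_{tau(j+1)})^+ *)
Fixpoint waiting (n : nat) (X : 'I_n -> T -> R) (tau : {perm 'I_n})
    (j : nat) (x : T) : R :=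
  match j with
  | 0%N => 0
  | j'.+1 => Num.max 0 (waiting X tau j' x + slotX X tau j' x)
  end.

End Defs.

(* Main.v *)
Require Import Defs.
From HB Require Import structures.
From mathcomp Require Import all_boot all_order all_algebra all_fingroup.
From mathcomp Require Import all_classical all_reals all_analysis.
From mathcomp Require Import measurable_realfun.
From mathcomp Require Import lra.
Set Implicit Arguments. Unset Strict Implicit. Unset Printing Implicit Defensive.
Import Order.TTheory GRing.Theory Num.Theory.
Import numFieldNormedType.Exports.
Local Open Scope classical_set_scope.
Local Open Scope ring_scope.

Section RealFacts.
Context (R : realType).
Definition Lr (a c : R) := Num.max 0 (c + Num.max 0 a).
Definition Rr (a c : R) :=
  2^-1 * (Num.max 0 (a + c) + Num.max 0 a + Num.max 0 c).

Ltac elim_max := repeat match goal with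
  | |- context[Num.max 0 ?x] =>
      (rewrite (@max_r _ _ 0 x); last by lra) ||
      (rewrite (@max_l _ _ 0 x); last by lra)
  end.

Lemma LR_sym a c : Lr a c + Lr (- a) (- c) = Rr a c + Rr (- a) (- c).
Proof.
rewrite /Lr /Rr.
case: (leP 0 a) => ha; case: (leP 0 c) => hc; case: (leP 0 (a + c)) => hac;
elim_max; lra.
Qed.

Lemma Lr_le (a c w : R) : 0 <= w -> c <= w -> c + a <= w -> Lr a c <= w.
Proof.
rewrite /Lr => h1 h2 h3; case: (leP 0 a) => ha; case: (leP 0 (c + a)) => hca;
case: (leP 0 c) => hc; elim_max; lra.
Qed.

Lemma Lr_ge0 a c : 0 <= Lr a c.
Proof. by rewrite /Lr le_max lexx. Qed.

Lemma Rr_ge0 a c : 0 <= Rr a c.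
Proof.
rewrite /Rr mulr_ge0 // ?invr_ge0 ?ler0n //.
by rewrite !addr_ge0 // le_max lexx.
Qed.

Lemma ee_cancel (a b : \bar R) : (0 <= a)%E -> (a + a <= b + b)%E -> (a <= b)%E.
Proof.
case: a => [a| |] //; case: b => [b| |] //= ha.
- by rewrite -!EFinD !lee_fin => h; lra.
- by move=> _; rewrite leey.
Qed.
End RealFacts.

Section Rects.
Context (R : realType) (n : nat).

Definition rects : set (set ('I_n -> R)) :=
  [set S | exists A : 'I_n -> set R, (forall i, measurable (A i)) /\
     S = [set f | forall i, A i (f i)]].

Local Notation VT := (g_sigma_algebraType rects).

Lemma rects_setI : setI_closed rects.
Proof.
move=> S1 S2 [A1 [mA1 ->]] [A2 [mA2 ->]].
exists (fun i => A1 i `&` A2 i); split; first by move=> i; exact: measurableI.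
by apply/seteqP; split => f /=; [move=> [h1 h2] i; split|move=> h; split => i; case: (h i)].
Qed.

Lemma proj_measurable (i : 'I_n) : measurable_fun [set: VT] (fun f : VT => f i).
Proof.
move=> _ Y mY; apply: sub_sigma_algebra.
exists (fun j => if j == i then Y else setT); split.
  by move=> j; case: (j == i).
apply/seteqP; split => f /=.
  by move=> [_ Yf] j; case: eqP => [->|].
by move=> h; split => //; have := h i; rewrite eqxx.
Qed.

Definition slotV (tau : {perm 'I_n}) (j : nat) (f : 'I_n -> R) : R :=
  match @insub nat (fun m => (m < n)%N) 'I_n j with
  | Some i => f (tau i)
  | None => 0
  end.

Lemma slotV_measurable tau j : measurable_fun [set: VT] (slotV tau j).
Proof.
rewrite /slotV; case: insub => [i|]; first exact: proj_measurable.
exact: measurable_cst.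
Qed.

Lemma slotV_neg tau j f : slotV tau j (fun i => - f i) = - slotV tau j f.
Proof. by rewrite /slotV; case: insub => [i|] //; rewrite oppr0. Qed.

Definition sumV tau (a b : nat) (f : 'I_n -> R) : R :=
  \sum_(a <= j < b) slotV tau j f.

Lemma sumV_measurable tau a b : measurable_fun [set: VT] (sumV tau a b).
Proof.
rewrite /sumV; apply: measurable_sum => j; exact: slotV_measurable.
Qed.

Lemma sumV_neg tau a b f : sumV tau a b (fun i => - f i) = - sumV tau a b f.
Proof.
rewrite /sumV -sumrN; apply: eq_bigr => j _; exact: slotV_neg.
Qed.

Definition Lv tau l k (f : 'I_n -> R) := Lr (sumV tau 0 l f) (sumV tau l k f).
Definition Rv tau l k (f : 'I_n -> R) := Rr (sumV tau 0 l f) (sumV tau l k f).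

Lemma Lv_measurable tau l k : measurable_fun [set: VT] (Lv tau l k).
Proof.
rewrite /Lv /Lr; apply: measurable_maxr; first exact: measurable_cst.
apply: measurable_funD; first exact: sumV_measurable.
apply: measurable_maxr; first exact: measurable_cst.
exact: sumV_measurable.
Qed.

Lemma Rv_measurable tau l k : measurable_fun [set: VT] (Rv tau l k).
Proof.
rewrite /Rv /Rr; apply: measurable_funM; first exact: measurable_cst.
apply: measurable_funD; first apply: measurable_funD.
- apply: measurable_maxr; first exact: measurable_cst.
  by apply: measurable_funD; exact: sumV_measurable.
- apply: measurable_maxr; first exact: measurable_cst.
  exact: sumV_measurable.
- apply: measurable_maxr; first exact: measurable_cst.
  exact: sumV_measurable.
Qed.

End Rects.

Section Sym.
Context d (T : measurableType d) (R : realType) (P : probability T R) (n : nat).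

Local Notation VT := (g_sigma_algebraType (@rects R n)).

Lemma preimage_rect (Y : 'I_n -> T -> R) (A : 'I_n -> set R) :
  (fun x => (fun i => Y i x) : VT) @^-1` [set f | forall i, A i (f i)] =
  \bigcap_i (Y i @^-1` A i).
Proof.
apply/seteqP; split => x /= h.
  by move=> i _; exact: h.
by move=> i; exact: h.
Qed.

Lemma measurable_toVT (Y : 'I_n -> T -> R) :
  (forall i, measurable_fun setT (Y i)) ->
  measurable_fun [set: T] (fun x => (fun i => Y i x) : VT).
Proof.
move=> mY.
have := @measurability _ _ T VT setT (fun x => (fun i => Y i x) : VT) (@rects R n) erefl.
apply.
move=> _ [S [A [mA ->]] <-]; rewrite setTI preimage_rect.
apply: fin_bigcap_measurable => //.
move=> i _; rewrite -(setTI (_ @^-1` _)); exact: mY.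
Qed.

Lemma law_eq (Y Z : 'I_n -> T -> R)
  (mY : forall i, measurable_fun setT (Y i))
  (mZ : forall i, measurable_fun setT (Z i)) :
  (forall A : 'I_n -> set R, (forall i, measurable (A i)) ->
     P (\bigcap_i (Y i @^-1` A i)) = P (\bigcap_i (Z i @^-1` A i))) ->
  forall phi : VT -> R, measurable_fun setT phi -> (forall f, 0 <= phi f) ->
  (\int[P]_x (phi (fun i => Y i x))%:E = \int[P]_x (phi (fun i => Z i x))%:E)%E.
Proof.
move=> hYZ phi mphi phi0.
have mFY := measurable_toVT mY.
have mFZ := measurable_toVT mZ.
have mephi : measurable_fun [set: VT] (fun y : VT => @EFin R (phi y)).
  exact/measurable_EFinP.
have p0 : {in [set: VT], forall y, (0 <= (phi y)%:E)%E}.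
  by move=> y _; rewrite lee_fin.
have e1 := ge0_integral_pushforward mFY P measurableT mephi p0.
have e2 := ge0_integral_pushforward mFZ P measurableT mephi p0.
rewrite preimage_setT in e1 e2.
rewrite -[LHS]/(\int[P]_(x in setT) _)%E -[RHS]/(\int[P]_(x in setT) _)%E.
rewrite -[LHS]e1 -[RHS]e2.
apply: eq_measure_integral => S mS _.
pose m1 := measure_function_pushforward__canonical__measure_function_Measure P mFY.
pose m2 := measure_function_pushforward__canonical__measure_function_Measure P mFZ.
have h1 := @measure_unique _ R VT (@rects R n) (fun _ => setT) erefl (@rects_setI R n).
have h2 := h1 _ _ m1 m2.
apply: h2 => //.
- move=> _; exists (fun=> setT); split => //.
  by apply/seteqP; split.
- by rewrite bigcup_const.
- move=> _ [A [mA ->]].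
  rewrite /m1 /m2 /= /pushforward !preimage_rect; exact: hYZ.
- by move=> _; rewrite /m1 /= /pushforward preimage_setT probability_setT ltry.
Qed.

End Sym.

Section Waiting.
Context d (T : measurableType d) (R : realType) (n : nat).
Variables (X : 'I_n -> T -> R) (tau : {perm 'I_n}).

Lemma slotXV j x : slotX X tau j x = slotV tau j (fun i => X i x).
Proof. by []. Qed.

Lemma waiting_ge x j : 0 <= waiting X tau j x /\
  forall m, (m <= j)%N -> \sum_(m <= i < j) slotX X tau i x <= waiting X tau j x.
Proof.
elim: j => [|j [h0 IH]] /=.
  split => // m; rewrite leqn0 => /eqP ->; by rewrite big_geq.
split; first by rewrite le_max lexx.
move=> m; rewrite leq_eqVlt => /orP [/eqP ->|hm].
  by rewrite big_geq // le_max lexx.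
rewrite big_nat_recr //=; apply: le_trans (_ : _ <= waiting X tau j x + slotX X tau j x) _.
  by rewrite lerD2r; apply: IH.
by rewrite le_max lexx orbT.
Qed.

Hypothesis mX : forall i, measurable_fun setT (X i).

Lemma slotX_measurable j : measurable_fun setT (slotX X tau j).
Proof.
rewrite /slotX; case: insub => [i|]; first exact: mX.
exact: measurable_cst.
Qed.

Lemma waiting_measurable j : measurable_fun setT (waiting X tau j).
Proof.
elim: j => [|j IH] /=; first exact: measurable_cst.
apply: measurable_maxr; first exact: measurable_cst.
apply: measurable_funD => //; exact: slotX_measurable.
Qed.

End Waiting.

Unset Implicit Arguments.

Theorem lemma3p4 (d : measure_display) (T : measurableType d) (R : realType)
  (P : probability T R) (n : nat) (B : 'I_n -> T -> R)
  (Bmeas : forall i, measurable_fun setT (B i))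
  (Bint : forall i, P.-integrable setT (fun x => (B i x)%:E))
  (Bindep : mutually_independent P B)
  (Bsym : forall i, symmetric_law P (fun x => B i x - mean P (B i)))
  (tau : {perm 'I_n}) (k l : nat)
  (hk1 : (1 <= k)%N) (hkn : (k <= n - 1)%N) (hlk : (l <= k)%N) :
  let X := fun i x => B i x - mean P (B i) in
  (\int[P]_x (waiting X tau k x)%:E >=
   (2^-1)%:E *
   (\int[P]_x (Num.max 0 (\sum_(0 <= j < k) slotX X tau j x))%:E +
    \int[P]_x (Num.max 0 (\sum_(0 <= j < l) slotX X tau j x))%:E +
    \int[P]_x (Num.max 0 (\sum_(l <= j < k) slotX X tau j x))%:E))%E.
Proof.
cbv zeta.
set X := (fun (i : 'I_n) (x : T) => B i x - mean P (B i)).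
have mX i : measurable_fun setT (X i).
  by apply: measurable_funB => //; exact: measurable_cst.
have mNX i : measurable_fun setT (fun x => - X i x).
  by apply: measurableT_comp => //.
have hlaw (A : 'I_n -> set R) : (forall i, measurable (A i)) ->
    P (\bigcap_i (X i @^-1` A i)) =
    P (\bigcap_i ((fun x => - X i x) @^-1` A i)).
  move=> mA.
  have key (g : 'I_n -> R -> R) : (forall i, measurable_fun setT (g i)) ->
      P (\bigcap_i ((fun x => g i (B i x)) @^-1` A i)) =
      (\prod_(i < n) P ((fun x => g i (B i x)) @^-1` A i))%E.
    move=> mg.
    have mA' i : measurable (g i @^-1` A i).
      by rewrite -(setTI (_ @^-1` _)); apply: mg.
    exact: (Bindep _ mA').
  have mg1 i : measurable_fun setT (fun y : R => y - mean P (B i)).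
    by apply: measurable_funB; [exact: measurable_id|exact: measurable_cst].
  have mg2 i : measurable_fun setT (fun y : R => - (y - mean P (B i))).
    by apply: measurableT_comp => //; exact: mg1.
  have e1 := key (fun i y => y - mean P (B i)) mg1.
  have e2 := key (fun i y => - (y - mean P (B i))) mg2.
  apply: (etrans e1); apply: (etrans _ (esym e2)).
  apply: eq_bigr => i _; exact: (Bsym i (A i) (mA i)).
pose F := fun x => (fun i => X i x) : g_sigma_algebraType (@rects R n).
have mF : measurable_fun setT F := measurable_toVT mX.
have hsym (phi : g_sigma_algebraType (@rects R n) -> R) :
    measurable_fun setT phi -> (forall f, 0 <= phi f) ->
    (\int[P]_x (phi (F x))%:E = \int[P]_x (phi (fun i => - X i x))%:E)%E.
  exact: (law_eq mX mNX hlaw).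
have mLF : measurable_fun setT (fun x => (Lv tau l k (F x))%:E).
  apply/measurable_EFinP; apply: measurableT_comp mF; exact: Lv_measurable.
have mLG : measurable_fun setT (fun x => (Lv tau l k (fun i => - X i x))%:E).
  apply/measurable_EFinP; apply: measurableT_comp (measurable_toVT mNX).
  exact: Lv_measurable.
have mRF : measurable_fun setT (fun x => (Rv tau l k (F x))%:E).
  apply/measurable_EFinP; apply: measurableT_comp mF; exact: Rv_measurable.
have mRG : measurable_fun setT (fun x => (Rv tau l k (fun i => - X i x))%:E).
  apply/measurable_EFinP; apply: measurableT_comp (measurable_toVT mNX).
  exact: Rv_measurable.
have mW : measurable_fun setT (fun x => (waiting X tau k x)%:E).
  by apply/measurable_EFinP; exact: waiting_measurable.
have sumA x : sumV tau 0 l (F x) = \sum_(0 <= j < l) slotX X tau j x by [].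
have sumC x : sumV tau l k (F x) = \sum_(l <= j < k) slotX X tau j x by [].
have sumAC x : \sum_(0 <= j < k) slotX X tau j x =
    sumV tau 0 l (F x) + sumV tau l k (F x).
  by rewrite sumA sumC -big_cat_nat.
have hLW : (\int[P]_x (Lv tau l k (F x))%:E <= \int[P]_x (waiting X tau k x)%:E)%E.
  apply: ge0_le_integral => //.
    by move=> x _; rewrite lee_fin Lr_ge0.
  move=> x _; rewrite lee_fin /Lv.
  have [w0 wge] := waiting_ge X tau x k.
  apply: Lr_le => //.
    by rewrite sumC; apply: wge.
  by rewrite addrC -sumAC; apply: wge.
have eL := hsym _ (Lv_measurable tau l k) (fun f => Lr_ge0 _ _).
have eR := hsym _ (Rv_measurable tau l k) (fun f => Rr_ge0 _ _).
have eLR : (\int[P]_x (Lv tau l k (F x))%:E + \int[P]_x (Lv tau l k (fun i => - X i x))%:E =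
    \int[P]_x (Rv tau l k (F x))%:E + \int[P]_x (Rv tau l k (fun i => - X i x))%:E)%E.
  rewrite -ge0_integralD //; last 2 first.
    by move=> x _; rewrite lee_fin Lr_ge0.
    by move=> x _; rewrite lee_fin Lr_ge0.
  rewrite -ge0_integralD //; last 2 first.
    by move=> x _; rewrite lee_fin Rr_ge0.
    by move=> x _; rewrite lee_fin Rr_ge0.
  apply: eq_integral => x _; rewrite -!EFinD /Lv /Rv !sumV_neg.
  by rewrite LR_sym.
have hRW : (\int[P]_x (Rv tau l k (F x))%:E <= \int[P]_x (waiting X tau k x)%:E)%E.
  apply: ee_cancel.
    by apply: integral_ge0 => x _; rewrite lee_fin Rr_ge0.
  rewrite [X in (X <= _)%E](_ : _ = \int[P]_x (Lv tau l k (F x))%:E +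
     \int[P]_x (Lv tau l k (F x))%:E)%E.
    exact: leeD.
  by rewrite {2}eR -eLR -eL.
apply: le_trans hRW.
have mS a b : measurable_fun setT
    (fun x => (Num.max 0 (\sum_(a <= j < b) slotX X tau j x))%:E).
  apply/measurable_EFinP; apply: measurable_maxr; first exact: measurable_cst.
  by apply: measurable_sum => j; exact: slotX_measurable.
have pS a b : forall x, setT x ->
    (0 <= (Num.max 0 (\sum_(a <= j < b) slotX X tau j x))%:E)%E.
  by move=> x _; rewrite lee_fin le_max lexx.
rewrite -(ge0_integralD P measurableT (pS 0 k) (mS 0 k) (pS 0 l) (mS 0 l)).
rewrite -(ge0_integralD P measurableT _ _ (pS l k) (mS l k)); last 2 first.
- by move=> x _; rewrite adde_ge0 // ?(pS 0 k) ?(pS 0 l).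
- exact: emeasurable_funD.
rewrite -ge0_integralZl //; last 2 first.
- by apply: emeasurable_funD => //; exact: emeasurable_funD.
- by move=> x _; rewrite !adde_ge0 // ?(pS 0 k) ?(pS 0 l) ?(pS l k).
rewrite le_eqVlt; apply/orP; left; apply/eqP; apply: eq_integral => x _.
by rewrite /Rv /Rr EFinM !EFinD sumAC.
Qed.
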